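(* Let $I\subset\mathbb R$ be a (not necessarily bounded) closed connected set with $0\in I$, equipped with the usual metric and base point $0$. Let $f\in\mathrm{Lip}_0(I,I)$ be such that $\mathrm{int}(R_{\widehat f})\neq\emptyset$. Then $f\circ f$ is the identity on $I$. In particular $R_{\widehat f}=\mathcal F(I)$.
   Context: $\mathrm{Lip}_0(I,I)$ denotes the Lipschitz maps $f:I\to I$ with $f(0)=0$; $\mathrm{Lip}_0(I)$ the real-valued Lipschitz functions vanishing at $0$ normed by the Lipschitz constant. $\delta:I\to\mathrm{Lip}_0(I)^*$, $\delta(x)(\varphi)=\varphi(x)$; the Lipschitz-free space $\mathcal F(I)$ is the norm-closed linear span of $\delta(I)$. $\widehat f$ is the unique bounded linear operator on $\mathcal F(I)$ with $\widehat f(\delta(x))=\delta(f(x))$. For an operator $T$, $R_T=\{\mu:\liminf_{n}\|T^n\mu-\mu\|=0\}$. *)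

(* Defs.v *)
From HB Require Import structures.
From mathcomp Require Import all_boot all_order all_algebra.
From mathcomp Require Import all_classical all_reals all_analysis.
Set Implicit Arguments. Unset Strict Implicit. Unset Printing Implicit Defensive.
Import Order.TTheory GRing.Theory Num.Theory.
Import numFieldNormedType.Exports.
Local Open Scope classical_set_scope.
Local Open Scope ring_scope.

Definition lip_on {R : realType} (I : set R) (g : R -> R) (L : R) : Prop :=
  0 <= L /\ forall x y, I x -> I y -> `|g x - g y| <= L * `|x - y|.

(* phi represents an element of Lip_0(I) with Lipschitz constant <= L
   (only the restriction of phi to I matters). *)
Definition Lip0 {R : realType} (I : set R) (phi : R -> R) (L : R) : Prop :=
  phi 0 = 0 /\ lip_on I phi L.

Definition Lip0_self {R : realType} (I : set R) (f : R -> R) : Prop :=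
  (forall x, I x -> I (f x)) /\ f 0 = 0 /\ exists L, lip_on I f L.

(* Functionals on Lip_0(I) (elements of the dual are represented by their
   action on test functions). *)
Definition functional (R : realType) := (R -> R) -> R.

Definition delta {R : realType} (x : R) : functional R := fun phi => phi x.

Definition fsub {R : realType} (mu nu : functional R) : functional R :=
  fun phi => mu phi - nu phi.

(* ||mu||_{Lip_0(I)^*} <= s, i.e. |mu phi| <= s * Lip(phi) for all phi in Lip_0(I). *)
Definition fnorm_le {R : realType} (I : set R) (mu : functional R) (s : R) : Prop :=
  forall phi L, Lip0 I phi L -> `|mu phi| <= s * L.

Definition fnorm_lt {R : realType} (I : set R) (mu : functional R) (e : R) : Prop :=
  exists s, s < e /\ fnorm_le I mu s.

Definition molecule {R : realType} (l : seq (R * R)) : functional R :=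
  fun phi => \sum_(p <- l) p.1 * phi p.2.

Definition in_span_delta {R : realType} (I : set R) (mu : functional R) : Prop :=
  exists l : seq (R * R), (forall p, p \in l -> I p.2) /\ mu = molecule l.

Definition free_space {R : realType} (I : set R) : set (functional R) :=
  [set mu | forall e, 0 < e ->
     exists nu, in_span_delta I nu /\ fnorm_le I (fsub mu nu) e].

(* \hat f : delta(x) |-> delta(f x), extended linearly/continuously:
   (\hat f mu)(phi) = mu (phi o f). *)
Definition fhat {R : realType} (f : R -> R) (mu : functional R) : functional R :=
  fun phi => mu (phi \o f).

Definition recurrent {R : realType} (I : set R) (T : functional R -> functional R)
  (mu : functional R) : Prop :=
  forall (e : R) (N : nat), 0 < e ->
    exists n, (N <= n)%N /\ fnorm_lt I (fsub (iter n T mu) mu) e.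

Definition R_set {R : realType} (I : set R) (T : functional R -> functional R)
  : set (functional R) :=
  [set mu | free_space I mu /\ recurrent I T mu].

Definition nonempty_interior {R : realType} (I : set R) (S : set (functional R)) : Prop :=
  exists mu0, free_space I mu0 /\ exists r, 0 < r /\
    forall mu, free_space I mu -> fnorm_lt I (fsub mu mu0) r -> S mu.

(* Main.v *)
Require Import Defs.
From mathcomp Require Import all_boot all_order all_algebra.
From mathcomp Require Import all_classical all_reals all_analysis.
Import Order.TTheory GRing.Theory Num.Theory.
Import numFieldNormedType.Exports.
Import Num.Def.
From mathcomp Require Import ring lra.
Local Open Scope classical_set_scope.
Local Open Scope ring_scope.

Lemma lip_within_cont (R : realType) (A : set R) (f : R -> R) (L : R) :
  lip_on A f L -> {within A, continuous f}.
Proof.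
move=> [L0 Hl]; apply/subspace_continuousP => x Ax.
apply/cvgrPdist_lt => e e0.
rewrite near_withinE; near=> t => At.
apply: (le_lt_trans (Hl x t Ax At)).
have L1 : 0 < L + 1 by rewrite ltr_wpDl.
have : `|x - t| < e / (L + 1).
  near: t; apply/nbhs_ballP; exists (e/(L+1)).
  by apply: divr_gt0 => //; rewrite ltr_wpDl.
  by move=> u /=; rewrite -ball_normE /=.
move=> H; apply: (le_lt_trans (y := (L+1) * `|x - t|)).
  by rewrite ler_wpM2r // lerDl.
by rewrite -ltr_pdivlMl // mulrC.
Unshelve. all: by end_near.
Qed.
Lemma pair_max (R : realType) (g : R -> R) (a b d : R) :
  a < b -> 0 < d -> {within `[a, b], continuous g} -> g a = g b ->
  (exists c, c \in `[a, b] /\ g a < g c) ->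
  exists p q, [/\ a <= p, p < q, q <= b, q - p <= d + d & g p = g q].
Proof.
move=> ab d0 gc gab [c0 [c0ab gc0]].
have [c cab cmax] := EVT_max (ltW ab) gc.
have gac : g a < g c by apply: (lt_le_trans gc0); apply: cmax.
have ac : a < c.
  move: cab; rewrite in_itv /= => /andP[+ _]; rewrite le_eqVlt => /predU1P[E|//].
  by move: gac; rewrite E ltxx.
have cb : c < b.
  move: cab; rewrite in_itv /= => /andP[_ +]; rewrite le_eqVlt => /predU1P[E|//].
  by move: gac; rewrite E gab ltxx.
set u := maxr a (c - d); set v := minr b (c + d).
have uc : u < c by rewrite /u gt_max ac /= ltrBlDr ltrDl.
have cv : c < v by rewrite /v lt_min cb /= ltrDl.
have au : a <= u by rewrite /u le_max lexx.
have vb : v <= b by rewrite /v ge_min lexx.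
have ud : c - d <= u by rewrite /u le_max lexx orbT.
have vd : v <= c + d by rewrite /v ge_min lexx orbT.
have inab t : u <= t <= v -> t \in `[a, b].
  move=> /andP[ut tv]; rewrite in_itv /=; apply/andP; split.
    exact: le_trans au ut.
  exact: le_trans tv vb.
have gu : g u <= g c by apply: cmax; apply: inab; rewrite lexx ltW // (lt_trans uc cv).
have gv : g v <= g c by apply: cmax; apply: inab; rewrite lexx ltW // (lt_trans uc cv).
have sub1 : {within `[u, c], continuous g}.
  apply: (continuous_subspaceW _ gc) => t /=; rewrite in_itv /= => /andP[ut tc].
  by apply: inab; rewrite ut /= (le_trans tc) // ltW.
have sub2 : {within `[c, v], continuous g}.
  apply: (continuous_subspaceW _ gc) => t /=; rewrite in_itv /= => /andP[ct tv].
  by apply: inab; rewrite tv andbT (le_trans _ ct) // ltW.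
have [guv|gvu] := leP (g u) (g v).
- have [p pI gp] : exists2 p, p \in `[u, c] & g p = g v.
    apply: IVT => //; first exact: ltW.
    by rewrite ge_min guv /= le_max gv orbT.
  move: pI; rewrite in_itv /= => /andP[up pc].
  exists p, v; split => //.
  + exact: le_trans au up.
  + exact: le_lt_trans pc cv.
  + have := le_trans ud up; lra.
- have [q qI gq] : exists2 q, q \in `[c, v] & g q = g u.
    apply: IVT => //; first exact: ltW.
    by rewrite ge_min (ltW gvu) orbT /= le_max gu.
  move: qI; rewrite in_itv /= => /andP[cq qv].
  exists u, q; split => //.
  + exact: lt_le_trans uc cq.
  + exact: le_trans qv vb.
  + have := le_trans qv vd; lra.
Qed.

Lemma pair_gen (R : realType) (g : R -> R) (a b d : R) :
  a < b -> 0 < d -> {within `[a, b], continuous g} -> g a = g b ->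
  exists p q, [/\ a <= p, p < q, q <= b, q - p <= d + d & g p = g q].
Proof.
move=> ab d0 gc gab.
have [H|H] := pselect (exists c, c \in `[a, b] /\ g a < g c).
  exact: pair_max.
have [H'|H'] := pselect (exists c, c \in `[a, b] /\ - g a < - g c).
  have gc' : {within `[a, b], continuous (fun x => - g x)}.
    by move=> x; apply: continuousN; apply: gc.
  have [p [q [ap pq qb qp E]]] := @pair_max R (fun x => - g x) a b d ab d0 gc' (congr1 -%R gab) H'.
  by exists p, q; split => //; apply: oppr_inj.
have cst t : t \in `[a, b] -> g t = g a.
  move=> tI; apply/eqP; rewrite eq_le; apply/andP; split.
    by rewrite leNgt; apply/negP => lt; apply: H; exists t.
  by rewrite leNgt; apply/negP => lt; apply: H'; exists t; rewrite ltrN2.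
exists a, (minr b (a + d)); split.
- exact: lexx.
- by rewrite lt_min ab ltrDl.
- by rewrite ge_min lexx.
- have : minr b (a + d) <= a + d by rewrite ge_min lexx orbT.
  lra.
- rewrite (cst (minr b (a + d))) //.
  by rewrite in_itv /= ge_min lexx le_min ltW //= lerDl ltW.
Qed.
Lemma iter_in (R : realType) (I : set R) (g : R -> R) x n :
  (forall y, I y -> I (g y)) -> I x -> I (iter n g x).
Proof. by move=> gI Ix; elim: n => //= n IH; apply: gI. Qed.

Lemma mono_iter_dist (R : realType) (I : set R) (g : R -> R) x :
  (forall y, I y -> I (g y)) ->
  (forall y z, I y -> I z -> y <= z -> g y <= g z) -> I x ->
  forall n, (0 < n)%N -> `|g x - x| <= `|iter n g x - x|.
Proof.
move=> gI gm Ix.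
have [xg|gx] := lerP x (g x).
- have H n : x <= iter n g x.
    elim: n => //= n IH; apply: le_trans xg _; apply: gm => //; exact: iter_in.
  case=> // n _ /=.
  have : g x <= g (iter n g x) by apply: gm => //; exact: iter_in.
  move=> h; rewrite !ger0_norm ?subr_ge0 //; last by apply: le_trans xg _.
  by apply: lerB.
- have H n : iter n g x <= x.
    elim: n => //= n IH; apply: le_trans (ltW gx); apply: gm => //; exact: iter_in.
  case=> // n _ /=.
  have : g (iter n g x) <= g x by apply: gm => //; exact: iter_in.
  move=> h; rewrite !ler0_norm ?subr_le0 ?(ltW gx) //; last by apply: le_trans h (ltW gx).
  by rewrite opprB lerD2l lerN2.
Qed.

Lemma is_interval_scale (R : realType) (I : set R) x c :
  is_interval I -> I 0 -> I x -> 0 <= c <= 1 -> I (x * c).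
Proof.
move=> iI I0 Ix /andP[c0 c1].
have [x0|x0] := leP 0 x.
- apply: (iI 0 x) => //; apply/andP; split; first exact: mulr_ge0.
  by rewrite -[X in _ <= X]mulr1 ler_wpM2l.
- apply: (iI x 0) => //; apply/andP; split.
    by rewrite -[X in X <= _]mulr1 ler_wnM2l // ltW.
  by rewrite nmulr_rle0 // ltW.
Qed.

Lemma opp_sign_dist (R : realType) (x y : R) : x * y < 0 -> `|x| <= `|y - x|.
Proof.
case: (ltP 0 x) => [xp|xn].
  rewrite (pmulr_rlt0 _ xp) => yn.
  rewrite gtr0_norm // ltr0_norm ?subr_lt0; [lra| lra].
case: (ltP x 0) => [xn'|xp].
  rewrite (nmulr_rlt0 _ xn') => yp.
  rewrite ltr0_norm // gtr0_norm ?subr_gt0; [lra| lra].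
have -> : x = 0 by apply/eqP; rewrite eq_le xn xp.
by rewrite mul0r ltxx.
Qed.

Lemma iter_double (R : Type) (f : R -> R) x k :
  iter (k.*2) f x = iter k (fun y => f (f y)) x.
Proof. by elim: k => //= k IH; rewrite IH. Qed.

Lemma dyn (R : realType) (I : set R) (f : R -> R) (L h0 : R) :
  is_interval I -> I 0 -> (forall x, I x -> I (f x)) -> f 0 = 0 ->
  lip_on I f L -> 0 < h0 ->
  (forall a b (k : R) (N : nat), I a -> I b -> 0 < `|a - b| -> `|a - b| <= h0 ->
      0 < k -> k <= 1 ->
      exists n, (N <= n)%N /\ `|iter n f a - a| < k * `|a - b| /\
                `|iter n f b - b| < k * `|a - b|) ->
  forall x, I x -> f (f x) = x.
Proof.
move=> iI I0 fI f0 flip h00 Hp.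
have rec : forall x, I x -> x != 0 -> forall e N, 0 < e ->
    exists n, (N <= n)%N /\ `|iter n f x - x| < e.
  move=> x Ix x0 e N e0.
  set d := minr `|x| h0.
  have d0 : 0 < d by rewrite lt_min normr_gt0 x0.
  have dx : d <= `|x| by rewrite ge_min lexx.
  have dh : d <= h0 by rewrite ge_min lexx orbT.
  have nx0 : 0 < `|x| by rewrite normr_gt0.
  set b := x * (1 - d / `|x|).
  have Ib : I b.
    apply: is_interval_scale => //; apply/andP; split.
      by rewrite subr_ge0 ler_pdivrMr // mul1r.
    by rewrite lerBlDr lerDl divr_ge0 // ltW.
  have xb : `|x - b| = d.
    rewrite /b mulrBr mulr1 opprB addrCA subrr addr0 normrM.
    rewrite (ger0_norm (divr_ge0 (ltW d0) (ltW nx0))) mulrCA mulfV ?mulr1 //.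
    by rewrite gt_eqF.
  set k := minr 1 (e / d).
  have k0 : 0 < k by rewrite lt_min ltr01 divr_gt0.
  have k1 : k <= 1 by rewrite ge_min lexx.
  have [n [Nn [h1 _]]] := Hp x b k N Ix Ib (ltac:(by rewrite xb)) (ltac:(by rewrite xb)) k0 k1.
  exists n; split => //; apply: lt_le_trans h1 _; rewrite xb.
  by rewrite -ler_pdivlMr // ge_min lexx orbT.
have linj : forall a b, I a -> I b -> 0 < `|a - b| -> `|a - b| <= h0 -> f a = f b -> False.
  move=> a b Ia Ib ab0 abh fab.
  have k0 : 0 < 1/4 :> R by rewrite divr_gt0.
  have k1 : 1/4 <= 1 :> R by rewrite ler_pdivrMr // mul1r ler1n.
  have [n [n1 [h1 h2]]] := Hp a b (1/4) 1%N Ia Ib ab0 abh k0 k1.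
  case: n n1 h1 h2 => // n _; rewrite !iterSr fab.
  set y := iter n f (f b) => h1 h2.
  have := ler_distD y a b; rewrite (distrC a y).
  lra.
have key : forall a b, I a -> I b -> a < b -> f a = f b -> False.
  move=> a b Ia Ib ab fab.
  have Iab t : t \in `[a, b] -> I t.
    by rewrite in_itv /= => /andP[ha hb]; apply: (iI a b) => //; rewrite ha hb.
  have lab : lip_on [set` `[a, b]] f L.
    by case: flip => L0 H; split => // u v /Iab Iu /Iab Iv; apply: H.
  have gc : {within `[a, b], continuous f} by apply: (@lip_within_cont R _ f L lab).
  have h2 : 0 < h0 / 2 by rewrite divr_gt0.
  have [p [q [ap pq qb qp E]]] := @pair_gen R f a b (h0/2) ab h2 gc fab.
  have Ip : I p by apply: Iab; rewrite in_itv /= ap /= ltW // (lt_le_trans pq).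
  have Iq : I q by apply: Iab; rewrite in_itv /= qb andbT ltW // (le_lt_trans ap).
  have pq0 : 0 < `|p - q| by rewrite distrC normr_gt0 subr_eq0 gt_eqF.
  have pqh : `|p - q| <= h0.
    rewrite distrC ger0_norm; last by rewrite subr_ge0 ltW.
    apply: (le_trans qp).
    by rewrite -splitr.
  exact: (linj p q Ip Iq pq0 pqh E).
have inj : forall a b, I a -> I b -> f a = f b -> a = b.
  move=> a b Ia Ib fab; case: (ltgtP a b) => // ab.
  - by case: (key a b Ia Ib ab fab).
  - by case: (key b a Ib Ia ab (esym fab)).
have eI : I = [set x | x \in Rhull I] by apply/is_intervalP.
have memI : forall x, x \in Rhull I -> I x by move=> x; rewrite {2}eI.
have Imem : forall x, I x -> x \in Rhull I by move=> x; rewrite {1}eI.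
have cI : {within [set` Rhull I], continuous f}.
  have -> : [set` Rhull I] = I by rewrite {2}eI.
  exact: (@lip_within_cont R I f L flip).
have iR : {in Rhull I &, injective f}.
  by move=> x y /memI Ix /memI Iy; apply: inj.
move=> x Ix.
have [->|x0] := eqVneq x 0; first by rewrite !f0.
have [incr|decr] := itv_continuous_inj_mono cI iR.
- have fm : forall y z, I y -> I z -> y <= z -> f y <= f z.
    move=> y z Iy Iz; rewrite le_eqVlt => /predU1P[->//|yz].
    by apply: ltW; apply: incr => //; apply: Imem.
  suff fx : f x = x by rewrite !fx.
  case: (eqVneq (f x) x) => // ne.
  have pos : 0 < `|f x - x| by rewrite normr_gt0 subr_eq0.
  have [n [n1 hn]] := rec x Ix x0 _ 1%N pos.
  have := @mono_iter_dist R I f x fI fm Ix n n1.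
  by rewrite leNgt hn.
- have fd : forall y z, I y -> I z -> y < z -> f z < f y.
    by move=> y z Iy Iz yz; apply: decr => //; apply: Imem.
  have gI : forall y, I y -> I (f (f y)) by move=> y Iy; exact: (fI _ (fI _ Iy)).
  have gm : forall y z, I y -> I z -> y <= z -> f (f y) <= f (f z).
    move=> y z Iy Iz; rewrite le_eqVlt => /predU1P[->//|yz].
    by apply: ltW; apply: (fd (f z) (f y) (fI _ Iz) (fI _ Iy)); exact: fd.
  have sgn : forall y, I y -> y != 0 -> y * f y < 0.
    move=> y Iy y0; have [yn|yp] := ltP y 0.
      by rewrite nmulr_rlt0 // -f0; apply: fd.
    have yp' : 0 < y by rewrite lt_neqAle eq_sym y0.
    by rewrite pmulr_rlt0 // -f0; apply: fd.
  have par : forall n, if odd n then x * iter n f x < 0 else 0 < x * iter n f x.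
    elim=> [|n IH] /=; first by rewrite lt_neqAle eq_sym mulf_neq0 //= -expr2 sqr_ge0.
    set y := iter n f x in IH *.
    have y0 : y != 0 by apply/eqP => y0; move: IH; rewrite y0 mulr0; case: odd; rewrite ltxx.
    have Iy : I y by apply: iter_in.
    have := sgn y Iy y0.
    have yy : 0 < y * y by rewrite lt_neqAle eq_sym mulf_neq0 //= -expr2 sqr_ge0.
    have E : x * f y * (y * y) = (x * y) * (y * f y) by rewrite mulrACA; congr (_ * _); rewrite mulrC.
    case: (odd n) IH => /= IH h.
    + by rewrite -(pmulr_lgt0 _ yy) E nmulr_rgt0.
    + by rewrite -(pmulr_llt0 _ yy) E pmulr_rlt0.
  case: (eqVneq (f (f x)) x) => // ne.
  set e := minr `|x| `|f (f x) - x|.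
  have e0 : 0 < e by rewrite lt_min !normr_gt0 x0 subr_eq0 ne.
  have [n [n1 hn]] := rec x Ix x0 e 1%N e0.
  have ev : ~~ odd n.
    apply/negP => on; have := par n; rewrite on => h.
    have := @opp_sign_dist R _ _ h; rewrite distrC => h'.
    have : e <= `|x| by rewrite ge_min lexx.
    move: hn; rewrite (distrC _ x); lra.
  have nE : (n./2).*2 = n by have := odd_double_half n; rewrite (negbTE ev).
  have k1 : (0 < n./2)%N by move: n1; rewrite -nE; case: (n./2).
  have := @mono_iter_dist R I (fun y => f (f y)) x gI gm Ix _ k1.
  rewrite -iter_double nE leNgt => /negP H; exfalso; apply: H.
  apply: lt_le_trans hn _.
  by rewrite ge_min lexx orbT.
Qed.
Lemma maxr0_lip (R : realType) (u v : R) : `|maxr 0 u - maxr 0 v| <= `|u - v|.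
Proof.
have [u0|u0] := leP 0 u; have [v0|v0] := leP 0 v.
- by [].
- rewrite subr0 (ger0_norm u0) ger0_norm; lra.
- rewrite sub0r normrN (ger0_norm v0) ler0_norm; lra.
- by rewrite subrr normr0.
Qed.

Lemma iter_fhat (R : realType) (f : R -> R) (mu : functional R) n :
  iter n (fhat f) mu = fun phi => mu (fun t => phi (iter n f t)).
Proof.
elim: n => [|n IH] /=; first by apply: funext => phi.
by rewrite IH; apply: funext => phi.
Qed.

Lemma core (R : realType) (I : set R) (f : R -> R) (l : seq (R * R))
  (c z w rho s : R) (n : nat) :
  0 < rho -> rho <= `|z - w| ->
  (forall phi L, Lip0 I phi L ->
    `|(molecule l (fun t => phi (iter n f t)) + c * (phi (iter n f z) - phi (iter n f w)))
      - (molecule l phi + c * (phi z - phi w))| <= s * L) ->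
  s < rho * (`|c| - \sum_(p <- l) `|p.1|) -> `|iter n f z - z| < rho.
Proof.
move=> rho0 rzw H hs.
rewrite ltNge; apply/negP => hfar.
set B := fun t => maxr 0 (rho - `|t - z|).
set psi := fun t => B t - B 0.
have B0 t : 0 <= B t by rewrite /B le_max lexx.
have Br t : B t <= rho by rewrite /B ge_max ltW //= lerBlDr lerDl.
have Lpsi : Lip0 I psi 1.
  split; first by rewrite /psi subrr.
  split => // x y _ _; rewrite mul1r /psi opprB addrA subrK /B.
  apply: (le_trans (@maxr0_lip R _ _)).
  have -> : (rho - `|x - z|) - (rho - `|y - z|) = `|y - z| - `|x - z| by ring.
  apply: (le_trans (ler_dist_dist _ _)).
  have -> : (y - z) - (x - z) = - (x - y) by ring.
  by rewrite normrN.
have := H psi 1 Lpsi; rewrite mulr1.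
have Bz : B z = rho by rewrite /B subrr normr0 subr0 max_r // ltW.
have Bw : B w = 0 by rewrite /B max_l // subr_le0 distrC.
have Bfz : B (iter n f z) = 0 by rewrite /B max_l // subr_le0.
have hX : `|molecule l (fun t => psi (iter n f t)) - molecule l psi| <=
    rho * \sum_(p <- l) `|p.1|.
  rewrite /molecule -sumrB big_distrr /=.
  apply: (le_trans (ler_norm_sum _ _ _)); apply: ler_sum => p _.
  rewrite -mulrBr normrM mulrC ler_wpM2r //.
  rewrite /psi opprB addrA subrK.
  have := B0 (iter n f p.2); have := B0 p.2; have := Br (iter n f p.2); have := Br p.2.
  move: (B (iter n f p.2)) (B p.2) => u v; rewrite ler_norml; lra.
have hY : rho * `|c| <=
    `|c * (psi (iter n f z) - psi (iter n f w)) - c * (psi z - psi w)|.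
  rewrite -mulrBr normrM mulrC; apply: ler_wpM2l => //.
  rewrite /psi Bz Bw Bfz.
  have := B0 (iter n f w); have := Br (iter n f w).
  move: (B (iter n f w)) (B 0) => u v; rewrite ler_normr; lra.
move: hX hY.
move: (molecule l (fun t => psi (iter n f t))) (molecule l psi) => m1 m2.
move: (c * (psi (iter n f z) - psi (iter n f w))) (c * (psi z - psi w)) => y1 y2.
move=> hX hY h.
have : `|y1 - y2| <= `|m1 + y1 - (m2 + y2)| + `|m1 - m2|.
  have -> : y1 - y2 = (m1 + y1 - (m2 + y2)) + - (m1 - m2) by ring.
  by rewrite -(normrN (m1 - m2)); apply: ler_normD.
move=> h2.
have : rho * `|c| - rho * \sum_(p <- l) `|p.1| <= s by lra.
by rewrite -mulrBr => h3; move: hs; rewrite ltNge h3.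
Qed.

Lemma eqle (R : realType) (x y : R) : x = y -> x <= y.
Proof. by move=> ->. Qed.

Theorem theorem3p21 (R : realType) (I : set R) (f : R -> R) :
  closed I -> connected I -> I 0 ->
  Lip0_self I f ->
  nonempty_interior I (R_set I (fhat f)) ->
  (forall x, I x -> f (f x) = x) /\ R_set I (fhat f) = free_space I.
Proof.
move=> cI conI I0 [fI [f0 [L flip]]] [mu0 [fmu0 [r [r0 Hball]]]].
have iI : is_interval I by apply/connected_intervalP.
have r4 : 0 < r / 4 by rewrite divr_gt0.
have [nu [[l [lI nuE]] hnu]] := fmu0 (r/4) r4.
set A := \sum_(p <- l) `|p.1|.
have A0 : 0 <= A by rewrite /A; apply: sumr_ge0 => p _.
have A1 : 0 < A + 1 by lra.
set h0 := r / (4 * (A + 1)).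
have h00 : 0 < h0 by rewrite divr_gt0 // mulr_gt0.
have Hp : forall a b (k : R) (N : nat), I a -> I b -> 0 < `|a - b| -> `|a - b| <= h0 ->
      0 < k -> k <= 1 ->
      exists n, (N <= n)%N /\ `|iter n f a - a| < k * `|a - b| /\
                `|iter n f b - b| < k * `|a - b|.
  move=> a b k N Ia Ib hab0 habh k0 k1.
  set h := `|a - b| in hab0 habh *.
  set c := r / (2 * h).
  have c0 : 0 <= c by rewrite divr_ge0 // ?mulr_ge0 // ltW.
  have ch : c * h = r / 2 by rewrite /c; field; rewrite gt_eqF.
  set mu := fun phi : R -> R => nu phi + c * (phi a - phi b).
  have muR : R_set I (fhat f) mu.
    apply: Hball.
    - move=> e e0; exists mu; split.
        exists (l ++ [:: (c, a); (- c, b)]); split.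
          move=> p; rewrite mem_cat => /orP[/lI//|]; rewrite !inE.
          by move=> /orP[/eqP->|/eqP->].
        apply: funext => phi; rewrite /mu nuE /molecule big_cat /= !big_cons big_nil /=.
        ring.
      move=> phi L' [_ [L'0 _]]; rewrite /fsub subrr normr0.
      by apply: mulr_ge0 => //; exact: ltW.
    - exists (r/4 + r/2); split; first lra.
      move=> phi L' hphi; rewrite /fsub /mu.
      have h1 := hnu phi L' hphi; rewrite /fsub in h1.
      case: hphi => _ [L'0 Hl].
      have h2 := Hl a b Ia Ib.
      have h3 : `|c * (phi a - phi b)| <= r / 2 * L'.
        rewrite normrM (ger0_norm c0) -ch -mulrA.
        by apply: ler_wpM2l => //; rewrite mulrC.
      have h4 : `|nu phi + c * (phi a - phi b) - mu0 phi| <=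
          `|mu0 phi - nu phi| + `|c * (phi a - phi b)|.
        have -> : nu phi + c * (phi a - phi b) - mu0 phi =
          - (mu0 phi - nu phi) + c * (phi a - phi b) by ring.
        by rewrite -(normrN (mu0 phi - nu phi)); apply: ler_normD.
      rewrite mulrDl; lra.
  case: muR => _ hrec.
  have e0 : 0 < k * r / 4 by rewrite divr_gt0 // mulr_gt0.
  have [n [Nn [s [hs Hs]]]] := hrec (k * r / 4) N e0.
  exists n; split => //.
  have Ah : A * h <= r / 4.
    apply: (le_trans (y := (A + 1) * h)); first by rewrite ler_wpM2r ?lerDl // ltW.
    apply: (le_trans (y := (A + 1) * h0)); first by rewrite ler_wpM2l // ltW.
    by rewrite /h0; apply: eqle; field; rewrite gt_eqF.
  have kAh : k * (A * h) <= k * (r / 4) by apply: ler_wpM2l => //; exact: ltW.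
  have hs' : s < k * h * (`|c| - A).
    rewrite (ger0_norm c0).
    have -> : k * h * (c - A) = k * (c * h) - k * (A * h) by ring.
    rewrite ch.
    have E4 : k * r / 4 = k * (r / 4) by rewrite mulrA.
    have E2 : k * (r / 2) = 2 * (k * (r / 4)) by field.
    rewrite E4 in hs; rewrite E2; lra.
  have kh0 : 0 < k * h by rewrite mulr_gt0.
  have khh : k * h <= h by rewrite ler_piMl // ltW.
  split.
  - apply: (@core R I f l c a b (k * h) s n) => //.
    move=> phi L' hphi; apply: le_trans (Hs phi L' hphi).
    by rewrite /fsub iter_fhat /mu nuE.
  - apply: (@core R I f l (- c) b a (k * h) s n) => //.
    + by rewrite distrC.
    + move=> phi L' hphi; apply: le_trans (Hs phi L' hphi).
      rewrite /fsub iter_fhat /mu nuE /=; apply: eqle; congr `|_|; ring.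
    + by rewrite normrN.
have P1 := @dyn R I f L h0 iI I0 fI f0 flip h00 Hp.
split => //.
apply/seteqP; split => [mu [] //|mu fmu]; split => //.
move=> e N e0; exists (N.*2); split; first by rewrite -addnn leq_addr.
exists 0; split => //.
have id2 : forall k x, I x -> iter k (fun y => f (f y)) x = x.
  by move=> k x Ix; elim: k => //= k ->; apply: P1.
have it0 : forall k, iter k f 0 = 0 by elim=> //= k ->.
move=> phi L' hphi; rewrite mul0r /fsub iter_fhat.
case: hphi => phi0 [L'0 Hl].
have hg : Lip0 I (fun t => phi (iter N.*2 f t)) L'.
  split; first by rewrite it0.
  split => // x y Ix Iy; rewrite !iter_double !id2 //; exact: Hl.
have hphi : Lip0 I phi L' by [].
apply/unstable.ler_gtP => z z0.
have L1 : 0 < 2 * (L' + 1) by rewrite mulr_gt0 // ltr_wpDl.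
set e' := z / (2 * (L' + 1)).
have e'0 : 0 < e' by rewrite divr_gt0.
have [nu' [[l' [l'I nu'E]] hnu']] := fmu e' e'0.
have g1 := hnu' _ _ hg; have g2 := hnu' _ _ hphi; rewrite /fsub in g1 g2.
have eqnu : nu' (fun t => phi (iter N.*2 f t)) = nu' phi.
  rewrite nu'E /molecule; apply: eq_big_seq => p /l'I Ip.
  by rewrite iter_double id2.
rewrite eqnu in g1.
have ez : e' * (2 * (L' + 1)) = z.
  by rewrite /e'; field; rewrite gt_eqF // ltr_wpDl.
have h3 : `|mu (fun t => phi (iter N.*2 f t)) - mu phi| <=
    `|mu (fun t => phi (iter N.*2 f t)) - nu' phi| + `|mu phi - nu' phi|.
  rewrite -(normrN (mu phi - nu' phi)).
  have -> : mu (fun t => phi (iter N.*2 f t)) - mu phi =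
    (mu (fun t => phi (iter N.*2 f t)) - nu' phi) + - (mu phi - nu' phi) by ring.
  exact: ler_normD.
have H5 : e' * L' <= e' * (L' + 1).
  by apply: ler_wpM2l; [exact: ltW | rewrite lerDl].
have E6 : e' * (2 * (L' + 1)) = 2 * (e' * (L' + 1)) by ring.
rewrite E6 in ez; lra.
Qed.
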